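(* The AMC (allocating marginal contributions) policy has competitive ratio $\alpha=\frac{2\mathsf{min}}{\mathsf{max}}$ with respect to greedy players when the characteristic functions range over $V_{\ge2}$.
   Context: Players: a finite set $N=\{a_1,\dots,a_n\}$. A characteristic function is $v:2^N\to\mathbb{R}_{\ge 0}$ with $v(\emptyset)=0$. There are fixed, known constants $0<\mathsf{min}\le\mathsf{max}$ and every $v$ considered is monotone and bounded: $\mathsf{min}\le v(S)\le v(T)\le\mathsf{max}$ for all nonempty $S\subseteq T\subseteq N$. For an integer $\delta\ge1$, $V_\delta$ denotes the set of such $v$ with $\delta\cdot\mathsf{min}\le\mathsf{max}<(\delta+1)\cdot\mathsf{min}$, and $V_{\ge2}=\bigcup_{\delta\ge2}V_\delta$. A coalition structure is a partition $C$ of $N$; its social welfare is $\mathsf{SW}(C\mid v)=\sum_{S\in C}v(S)$. Online process: an arrival order is a permutation $\pi=(\pi_1,\dots,\pi_n)$ of $N$; player $\pi_t$ arrives at time $t$; $\pi_{\prec t}$ is the set of players arriving before time $t$ and $\pi^{-1}(i)$ is the arrival time of $i$. For $S\subseteq N$, $\pi_{|S}$ denotes the players of $S$ in the relative order of $\pi$. Let $C^{t-1}$ be the coalition structure of players arrived before time $t$ ($C^0=\emptyset$). At time $t$, player $\pi_t$ either joins an existing coalition $S\in C^{t-1}$ or forms $\{\pi_t\}$ (choice $S=\emptyset$); decisions are never revised. A distribution policy $\varphi$ assigns to every $S\subseteq N$ and order $\pi_{|S}$ a vector $(\varphi_i(S,\pi_{|S}))_{i\in S}$ summing to $v(S)$.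 The AMC policy is $\varphi_i(S,\pi_{|S})=v\big((\pi_{\prec\pi^{-1}(i)}\cap S)\cup\{i\}\big)-v\big(\pi_{\prec\pi^{-1}(i)}\cap S\big)$ for $i\in S$ (each player receives her marginal contribution at the time she joins). Greedy players: $\pi_t$ chooses $S^*\in\arg\max_{S\in C^{t-1}\cup\{\emptyset\}}\varphi_{\pi_t}(S\cup\{\pi_t\},\pi_{|S\cup\{\pi_t\}})$ (predetermined tie-breaking). $C_g(v,\pi\mid\varphi)$ is the final structure. The competitive ratio over a class is $\alpha=\inf_{v,\pi}\mathsf{SW}(C_g(v,\pi\mid\varphi))/\max_C\mathsf{SW}(C\mid v)$, over $v$ in the class and all arrival orders $\pi$. *)

(* Defs.v *)
From HB Require Import structures.
From mathcomp Require Import all_boot all_order all_algebra all_fingroup.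
From mathcomp Require classical_sets.
From mathcomp Require Import reals.
Set Implicit Arguments. Unset Strict Implicit. Unset Printing Implicit Defensive.
Import Order.TTheory GRing.Theory Num.Theory.
Local Open Scope ring_scope.

(* Players are 'I_n; coalitions are {set 'I_n}; an arrival order is a
   permutation pi : {perm 'I_n}, player (pi t) arrives at time t. *)

Section Defs.
Variables (R : realType) (n : nat).
Implicit Types (v : {set 'I_n} -> R) (pi : {perm 'I_n}) (S T : {set 'I_n}).

Definition bounded_monotone (mn mx : R) v : Prop :=
  v set0 = 0 /\
  forall S T, S != set0 -> S \subset T ->
    mn <= v S /\ v S <= v T /\ v T <= mx.

Definition V_delta (mn mx : R) (delta : nat) v : Prop :=
  bounded_monotone mn mx v /\
  delta%:R * mn <= mx /\ mx < (delta.+1)%:R * mn.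

Definition V_ge2 (mn mx : R) v : Prop :=
  exists delta : nat, (2 <= delta)%N /\ V_delta mn mx delta v.

Definition arrived_before pi (i : 'I_n) : {set 'I_n} :=
  [set j | ((pi^-1)%g j < (pi^-1)%g i)%N].

Definition AMC v pi (S : {set 'I_n}) (i : 'I_n) : R :=
  v ((arrived_before pi i :&: S) :|: [set i]) - v (arrived_before pi i :&: S).

(* A (predetermined) tie-breaking rule: given the current coalition
   structure, the arriving player and the list of maximizing options
   (sublist of set0 :: C, in this order), return an index into that list
   (taken modulo its size). *)
Definition tiebreak := seq {set 'I_n} -> 'I_n -> seq {set 'I_n} -> nat.

(* One greedy step under distribution policy phi (phi S i = phi_i(S, pi|S)). *)
Definition greedy_step (tb : tiebreak) (phi : {set 'I_n} -> 'I_n -> R)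
    (C : seq {set 'I_n}) (i : 'I_n) : seq {set 'I_n} :=
  let pay S := phi (S :|: [set i]) i in
  let cands := set0 :: C in
  let m := \big[Num.max/pay set0]_(S <- C) pay S in
  let best := [seq S <- cands | pay S == m] in
  let S := nth set0 best (tb C i best %% size best) in
  if S == set0 then rcons C [set i]
  else [seq (if T == S then T :|: [set i] else T) | T <- C].

Definition greedy_outcome (tb : tiebreak) (phi : {set 'I_n} -> 'I_n -> R) pi
  : seq {set 'I_n} :=
  foldl (greedy_step tb phi) [::] [seq pi t | t <- enum 'I_n].

Definition SW v (C : seq {set 'I_n}) : R := \sum_(S <- C) v S.

Definition OPT v : R :=
  \big[Num.max/0]_(P : {set {set 'I_n}} | partition P [set: 'I_n])
     \sum_(S in P) v S.

End Defs.

Definition competitive_ratio_AMC_Vge2 (R : realType) (mn mx : R)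
    (tb : forall n : nat, tiebreak n) : R :=
  inf (fun r : R => exists (n : nat) (v : {set 'I_n} -> R) (pi : {perm 'I_n}),
         (0 < n)%N /\ V_ge2 mn mx v /\
         r = SW v (greedy_outcome (tb n) (AMC v pi) pi) / OPT v).

(* Main.v *)
Require Import Defs.
From HB Require Import structures.
From mathcomp Require Import all_boot all_order all_algebra all_fingroup.
From mathcomp Require classical_sets.
From mathcomp Require Import reals.
From mathcomp Require Import ring lra.
Set Implicit Arguments. Unset Strict Implicit. Unset Printing Implicit Defensive.
Import Order.TTheory GRing.Theory Num.Theory.
Local Open Scope ring_scope.

Section Greedy.
Variables (R : realType) (n : nat).

Lemma bigmax_ge (C : seq {set 'I_n}) (F : {set 'I_n} -> R) x0 :
  x0 <= \big[Num.max/x0]_(S <- C) F S.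
Proof.
elim: C => [|a C IH]; first by rewrite big_nil.
by rewrite big_cons le_max IH orbT.
Qed.

Lemma bigmax_ge_mem (C : seq {set 'I_n}) (F : {set 'I_n} -> R) x0 S :
  S \in C -> F S <= \big[Num.max/x0]_(S <- C) F S.
Proof.
elim: C => [|a C IH] //; rewrite in_cons big_cons le_max.
by case/orP => [/eqP->|/IH->]; rewrite ?lexx ?orbT.
Qed.

Lemma bigmax_le (C : seq {set 'I_n}) (F : {set 'I_n} -> R) x0 y :
  x0 <= y -> (forall S, S \in C -> F S <= y) ->
  \big[Num.max/x0]_(S <- C) F S <= y.
Proof.
move=> hx; elim: C => [|a C IH] H; first by rewrite big_nil.
rewrite big_cons ge_max H ?mem_head //= IH // => S SC.
by apply: H; rewrite in_cons SC orbT.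
Qed.

Lemma bigmax_att (C : seq {set 'I_n}) (F : {set 'I_n} -> R) x0 :
  \big[Num.max/x0]_(S <- C) F S = x0 \/
  exists2 S, S \in C & F S = \big[Num.max/x0]_(S <- C) F S.
Proof.
elim: C => [|a C IH]; first by left; rewrite big_nil.
rewrite big_cons maxEle; case: (leP (F a) (\big[Num.max/x0]_(S <- C) F S)) => h.
-  case: IH => [->|[S SC hS]]; first by left.
  by right; exists S => //; rewrite in_cons SC orbT.
- right; exists a => //; exact: mem_head.
Qed.

Variables (tb : tiebreak n) (phi : {set 'I_n} -> 'I_n -> R).

Definition pay (i : 'I_n) S := phi (S :|: [set i]) i.
Definition mval C i := \big[Num.max/pay i set0]_(S <- C) pay i S.
Definition chosen C i :=
  let best := [seq S <- set0 :: C | pay i S == mval C i] in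
  nth set0 best (tb C i best %% size best).

Lemma greedy_stepE C i : greedy_step tb phi C i =
  if chosen C i == set0 then rcons C [set i]
  else [seq (if T == chosen C i then T :|: [set i] else T) | T <- C].
Proof. by []. Qed.

Lemma chosen_spec C i : chosen C i \in set0 :: C /\ pay i (chosen C i) = mval C i.
Proof.
set best := [seq S <- set0 :: C | pay i S == mval C i].
have hb : (0 < size best)%N.
  rewrite size_filter -has_count; case: (bigmax_att C (pay i) (pay i set0)) => [h|[S SC h]].
  - by apply/hasP; exists set0; rewrite ?mem_head // /mval h.
  - by apply/hasP; exists S; rewrite ?in_cons ?SC ?orbT // /mval h.
have : chosen C i \in best by apply: mem_nth; rewrite ltn_pmod.
by rewrite mem_filter => /andP[/eqP -> ->].
Qed.

End Greedy.
Lemma chosen_unique (R : realType) n (tb : tiebreak n) (phi : {set 'I_n} -> 'I_n -> R) (C : seq {set 'I_n}) i T :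
  T \in set0 :: C ->
  (forall U, U \in set0 :: C -> U != T -> pay phi i U < pay phi i T) ->
  chosen tb phi C i = T.
Proof.
move=> TC H; have [hin hpay] := chosen_spec tb phi C i.
apply/eqP; apply/negP => /negP ne.
have := H _ hin ne; rewrite hpay.
have : pay phi i T <= mval phi C i.
  move: TC; rewrite in_cons => /orP[/eqP->|TC]; first exact: bigmax_ge.
  exact: bigmax_ge_mem.
move=> h1 h2; have := lt_le_trans h2 h1; by rewrite ltxx.
Qed.
Section Inv.
Variables (R : realType) (n : nat) (tb : tiebreak n) (v : {set 'I_n} -> R) (pi : {perm 'I_n}).
Hypothesis v0 : v set0 = 0.

Definition Inv (C : seq {set 'I_n}) (s : seq 'I_n) :=
  [/\ uniq C, (forall T, T \in C -> T \subset [set x | x \in s]) &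
   exists p : 'I_n -> R, SW v C = \sum_(x <- s) p x /\
     forall x, x \in s -> v [set x] <= p x].

Lemma AMC_pay i (S : {set 'I_n}) : S \subset arrived_before pi i ->
  pay (AMC v pi) i S = v (S :|: [set i]) - v S.
Proof.
move=> hS; rewrite /pay /AMC.
have -> : arrived_before pi i :&: (S :|: [set i]) = S.
  rewrite setIUr (setIidPr hS); apply/setP => x; rewrite !inE.
  by case: (eqVneq x i) => [->|]; rewrite ?ltnn ?andbF ?orbF.
done.
Qed.

Lemma Inv0 : Inv [::] [::].
Proof.
split => //; exists (fun _ => 0); split => //.
by rewrite /SW !big_nil.
Qed.

Lemma Inv_step C s i : i \notin s ->
  [set x | x \in s] \subset arrived_before pi i -> Inv C s ->
  Inv (greedy_step tb (AMC v pi) C i) (rcons s i).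
Proof.
move=> nis hsB [uC sC [p [hSW hp]]].
have iC : forall T, T \in C -> i \notin T.
  move=> T /sC /subsetP h; apply/negP => /h; rewrite inE; exact/negP. 
have TB : forall T, T \in C -> T \subset arrived_before pi i.
  by move=> T /sC h; exact: subset_trans h hsB.
case: (chosen_spec tb (AMC v pi) C i) => hin hpay.
set S := chosen tb (AMC v pi) C i in hin hpay *.
have h0 : pay (AMC v pi) i set0 = v [set i].
  by rewrite AMC_pay ?sub0set // set0U v0 subr0.
have hge : v [set i] <= pay (AMC v pi) i S.
  by rewrite hpay -h0; exact: bigmax_ge.
set p' := fun x => if x == i then pay (AMC v pi) i S else p x.
have hsum : \sum_(x <- rcons s i) p' x = \sum_(x <- s) p x + pay (AMC v pi) i S.
  rewrite -cats1 big_cat big_seq1 /= /p' eqxx; congr (_ + _).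
  rewrite big_seq_cond [RHS]big_seq_cond; apply: eq_bigr => x /andP[xs _].
  by case: eqP => // ex; move: nis; rewrite -ex xs.
have hp' : forall x, x \in rcons s i -> v [set x] <= p' x.
  move=> x; rewrite mem_rcons in_cons /p'; case: eqP => [->|_] //= /hp //.
rewrite greedy_stepE -/S; case: eqP => [S0|/eqP Sn0].
- split.
  + rewrite rcons_uniq uC andbT; apply/negP => /iC; rewrite inE eqxx //.
  + move=> T; rewrite mem_rcons in_cons => /orP[/eqP->|/sC h].
      by apply/subsetP => x; rewrite !inE => /eqP->; rewrite mem_rcons mem_head.
    apply: (subset_trans h); apply/subsetP => x; rewrite !inE mem_rcons in_cons => ->.
    by rewrite orbT.
  + exists p'; split => //; rewrite hsum -hSW /SW -cats1 big_cat big_seq1 /=.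
    by rewrite S0 h0.
- have SC : S \in C by move: hin; rewrite in_cons (negbTE Sn0).
  split.
  + rewrite map_inj_in_uniq // => T1 T2 h1 h2.
    case: eqP => [->|n1]; case: eqP => [->|n2] //.
    * move=> e; have : i \in T2 by rewrite -e !inE eqxx orbT.
      by move: (iC _ h2) => /negbTE ->.
    * move=> e; have : i \in T1 by rewrite e !inE eqxx orbT.
      by move: (iC _ h1) => /negbTE ->.
  + move=> T /mapP[T' T'C ->].
    have h := sC _ T'C.
    have hs : [set x | x \in s] \subset [set x | x \in rcons s i].
      by apply/subsetP => x; rewrite !inE mem_rcons in_cons => ->; rewrite orbT.
    case: eqP => _; last exact: subset_trans h hs.
    rewrite subUset (subset_trans h hs) /=; apply/subsetP => x.
    by rewrite !inE => /eqP->; rewrite mem_rcons mem_head.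
  + exists p'; split => //; rewrite hsum -hSW /SW big_map.
    rewrite (bigD1_seq S) // [in RHS](bigD1_seq S) //= eqxx.
    rewrite hpay -[mval _ _ _]hpay AMC_pay; last exact: TB.
    rewrite (addrC (v S)) -addrA (addrC (v S)) subrK addrC; congr (_ + _).
    by apply: eq_bigr => T /negbTE ->.
Qed.
End Inv.
Lemma mem_take_enum n k (t : 'I_n) : (t \in take k (enum 'I_n)) = (t < k)%N.
Proof.
rewrite -(mem_map val_inj) map_take val_enum_ord take_iota mem_iota /=.
by rewrite add0n leq_min ltn_ord andbT.
Qed.

Section Outcome.
Variables (R : realType) (n : nat) (tb : tiebreak n) (v : {set 'I_n} -> R) (pi : {perm 'I_n}).
Hypothesis v0 : v set0 = 0.

Lemma Inv_outcome : Inv v (greedy_outcome tb (AMC v pi) pi) [seq pi t | t <- enum 'I_n].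
Proof.
set ord := [seq pi t | t <- enum 'I_n].
have sz : size ord = n by rewrite size_map size_enum_ord.
suff H : forall k, (k <= n)%N ->
  Inv v (foldl (greedy_step tb (AMC v pi)) [::] (take k ord)) (take k ord).
  have e : take n ord = ord by apply/take_oversize; rewrite sz.
  by have := H n (leqnn n); rewrite e.
elim => [_|k IH hk]; first by rewrite take0; exact: Inv0.
have hk' : (k < size ord)%N by rewrite sz.
set t := Ordinal hk.
have hnth : nth (pi t) ord k = pi t.
  by rewrite /ord (nth_map t) ?size_enum_ord //; congr (pi _); apply: val_inj; rewrite /= nth_enum_ord.
rewrite (take_nth (pi t) hk') foldl_rcons hnth.
have tk : take k ord = map pi (take k (enum 'I_n)) by rewrite /ord map_take.
apply: Inv_step => //.
- rewrite tk mem_map; last exact: perm_inj.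
  by rewrite mem_take_enum ltnn.
- apply/subsetP => x; rewrite inE tk => /mapP[u uk ->].
  by rewrite inE !permK; move: uk; rewrite mem_take_enum.
- by apply: IH; apply: ltnW.
Qed.
End Outcome.
Section Lower.
Variables (R : realType) (n : nat) (tb : tiebreak n) (v : {set 'I_n} -> R) (pi : {perm 'I_n}).
Variables (mn mx : R).
Hypotheses (mn0 : 0 < mn) (mnx : 2 * mn <= mx) (bm : bounded_monotone mn mx v).

Lemma vS_bounds S : S != set0 -> mn <= v S /\ v S <= mx.
Proof.
move=> h; have [_ H] := bm; have [a [b c]] := H S S h (subxx S).
by split => //; apply: le_trans c.
Qed.

Lemma sum_partition (p : 'I_n -> R) (P : {set {set 'I_n}}) :
  (forall x, v [set x] <= p x) -> partition P [set: 'I_n] ->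
  2 * mn / mx * \sum_(S in P) v S <= \sum_x p x.
Proof.
move=> hp /and3P[/eqP cP tP s0P].
have mx0 : 0 < mx by apply: lt_le_trans mnx; rewrite mulr_gt0.
have c0 : 0 <= 2 * mn / mx by rewrite divr_ge0 // ltW // mulr_gt0.
have c1 : 2 * mn / mx <= 1 by rewrite ler_pdivrMr // mul1r.
have pge : forall x, mn <= p x.
  move=> x; apply: le_trans (hp x); apply: (vS_bounds _).1.
  by apply/set0Pn; exists x; rewrite inE.
have -> : \sum_x p x = \sum_(x in cover P) p x.
  by rewrite cP; apply: eq_bigl => x; rewrite inE.
rewrite big_trivIset // mulr_sumr; apply: ler_sum => S SP.
have Sn0 : S != set0 by apply/negP => /eqP e; move: s0P; rewrite -e SP.
have [vlo vhi] := vS_bounds Sn0.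
have [x xS] := set0Pn _ Sn0.
case: (boolP (S \subset [set x])) => hsub.
- have eS : S = [set x].
    by apply/eqP; rewrite eqEsubset hsub sub1set xS.
  rewrite eS big_set1; apply: le_trans (hp x); rewrite -eS.
  rewrite -[X in _ <= X]mul1r ler_wpM2r //; apply: le_trans vlo; exact: ltW.
- have [y yS yx] := subsetPn hsub.
  have yx' : y != x by move: yx; rewrite inE.
  rewrite (bigD1 x) //= (bigD1 y) /=; last by rewrite yS.
  have h0 : 0 <= \sum_(i < n | (i \in S) && (i != x) && (i != y)) p i.
    by apply: sumr_ge0 => i _; apply: le_trans (pge i); exact: ltW.
  apply: (@le_trans _ _ (2 * mn)).
    apply: le_trans (ler_wpM2l c0 vhi) _; rewrite divfK //; exact: lt0r_neq0.
  have := pge x; have := pge y; lra.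
Qed.

End Lower.
Lemma bigmax_cond_ge (R : realType) (I : eqType) (r : seq I) (P : pred I) (F : I -> R) x0 i :
  i \in r -> P i -> F i <= \big[Num.max/x0]_(j <- r | P j) F j.
Proof.
elim: r => [|a r IH] //; rewrite in_cons big_cons => /orP[/eqP<-|ir] Pi.
  by rewrite Pi le_max lexx.
case: ifP => _; last exact: IH.
by rewrite le_max IH ?orbT.
Qed.

Lemma OPT_ge (R : realType) n (v : {set 'I_n} -> R) P :
  partition P [set: 'I_n] -> \sum_(S in P) v S <= OPT v.
Proof. by move=> hP; apply: bigmax_cond_ge => //; exact: mem_index_enum. Qed.

Section LowerMain.
Variables (R : realType) (n : nat) (tb : tiebreak n) (v : {set 'I_n} -> R) (pi : {perm 'I_n}).
Variables (mn mx : R).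
Hypotheses (n0 : (0 < n)%N) (mn0 : 0 < mn) (mnx : 2 * mn <= mx) (bm : bounded_monotone mn mx v).

Lemma OPT_pos : 0 < OPT v.
Proof.
have hP : partition [set [set: 'I_n]] [set: 'I_n].
  rewrite /partition cover1 eqxx trivIset1 /= inE eq_sym; apply/set0Pn.
  by exists (Ordinal n0); rewrite inE.
apply: lt_le_trans (OPT_ge v hP); rewrite big_set1.
apply: lt_le_trans mn0 _; apply: (vS_bounds bm _).1.
by apply/set0Pn; exists (Ordinal n0); rewrite inE.
Qed.

Lemma ratio_lb : 2 * mn / mx <= SW v (greedy_outcome tb (AMC v pi) pi) / OPT v.
Proof.
have v0 : v set0 = 0 by case: bm.
have [_ _ [p [hSW hp]]] := Inv_outcome tb pi v0.
set ord := [seq pi t | t <- enum 'I_n] in hSW hp.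
have mord : forall x, x \in ord.
  by move=> x; apply/mapP; exists ((pi^-1)%g x); rewrite ?mem_enum ?permKV.
have hp' : forall x, v [set x] <= p x by move=> x; exact: hp.
have hsum : \sum_(x <- ord) p x = \sum_x p x.
  rewrite -big_enum /=; apply: perm_big; apply: uniq_perm.
  - by rewrite map_inj_uniq ?enum_uniq //; exact: perm_inj.
  - exact: enum_uniq.
  - by move=> x; rewrite mord mem_enum.
rewrite hSW hsum ler_pdivlMr; last exact: OPT_pos.
have pge : forall x, mn <= p x.
  move=> x; apply: le_trans (hp' x); apply: (vS_bounds bm _).1.
  by apply/set0Pn; exists x; rewrite inE.
have s0 : 0 <= \sum_x p x by apply: sumr_ge0 => i _; apply: le_trans (pge i); exact: ltW.
rewrite /OPT.
apply: (big_ind (fun y => 2 * mn / mx * y <= \sum_x p x)).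
- by rewrite mulr0.
- by move=> x y hx hy; rewrite maxEle; case: ifP.
- by move=> P hP; apply: sum_partition.
Qed.
End LowerMain.
From mathcomp Require Import zify.

Section Constr.
Variables (R : realType) (g : nat) (mn mx q : R).
Hypotheses (g0 : (0 < g)%N) (mn0 : 0 < mn) (mnq : mn < q)
  (hmx : mn + (g.-1)%:R * q <= mx) (hmx2 : mx < 2 * mn + (g.-1)%:R * q).
Local Notation N := (g + g)%N.

Definition pairfree (S : {set 'I_N}) :=
  ~~ [exists x in S, exists y in S, (x + g == y)%N].
Definition vC (S : {set 'I_N}) : R :=
  if S == set0 then 0 else if pairfree S then mn + (#|S|.-1)%:R * q else mx.

Lemma modg x : (x < g + g)%N -> (x %% g = if x < g then x else x - g)%N.
Proof.
move=> hx; case: (ltnP x g) => h; first by rewrite modn_small.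
rewrite -{1}(subnK h) modnDr modn_small //; lia.
Qed.

Lemma pf_sub (S T : {set 'I_N}) : S \subset T -> pairfree T -> pairfree S.
Proof.
move=> h; apply: contra => /existsP[x /andP[xS /existsP[y /andP[yS e]]]].
apply/existsP; exists x; rewrite (subsetP h _ xS) /=; apply/existsP; exists y.
by rewrite (subsetP h _ yS).
Qed.

Lemma pf_card (S : {set 'I_N}) : pairfree S -> (#|S| <= g)%N.
Proof.
move=> pf.
pose f := fun x : 'I_N => Ordinal (ltn_pmod x g0).
rewrite -(card_in_imset (f := f)).
  by apply: leq_trans (max_card _) _; rewrite card_ord.
move=> x y xS yS /(congr1 val) /= e.
apply: val_inj => /=.
have hx := ltn_ord x; have hy := ltn_ord y.
move: e; rewrite !modg // => e.
have n1 : (x + g != y)%N.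
  apply/eqP => E; move/negP: pf; apply; apply/existsP; exists x; rewrite xS /=.
  by apply/existsP; exists y; rewrite yS E /=.
have n2 : (y + g != x)%N.
  apply/eqP => E; move/negP: pf; apply; apply/existsP; exists y; rewrite yS /=.
  by apply/existsP; exists x; rewrite xS E /=.
move: e n1 n2; case: (ltnP x g) => ?; case: (ltnP y g) => ?; lia.
Qed.

Lemma qpos : 0 < q. Proof. exact: lt_trans mnq. Qed.

Lemma vC_bounds (S : {set 'I_N}) : S != set0 -> mn <= vC S /\ vC S <= mx.
Proof.
move=> Sn0; rewrite /vC (negbTE Sn0).
have qq := qpos.
case: ifP => pf.
- split; first by rewrite lerDl mulr_ge0 // ltW.
  apply: le_trans hmx; rewrite lerD2l ler_wpM2r ?ler_nat ?(ltW qq) //.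
  have := pf_card pf; lia.
- split => //; apply: le_trans hmx; rewrite lerDl mulr_ge0 // ltW //.
Qed.

Lemma vC_bm : bounded_monotone mn mx vC.
Proof.
split; first by rewrite /vC eqxx.
move=> S T Sn0 ST.
have Tn0 : T != set0.
  by apply: contraNneq Sn0 => e; rewrite -subset0 -e.
have [a b] := vC_bounds Sn0; have [c d] := vC_bounds Tn0.
split => //; split => //.
rewrite /vC (negbTE Sn0) (negbTE Tn0).
case: (boolP (pairfree T)) => pT; last by move: b; rewrite /vC (negbTE Sn0).
rewrite (pf_sub ST pT) lerD2l ler_wpM2r ?ler_nat ?(ltW qpos) //.
have := subset_leq_card ST; lia.
Qed.


Definition A k : {set 'I_N} := [set j : 'I_N | (j < k)%N].
Definition B k : {set 'I_N} := [set j : 'I_N | (g <= j < k)%N].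
Definition expected k : seq {set 'I_N} :=
  if k == 0%N then [::] else if (k <= g)%N then [:: A k] else [:: A g; B k].

Lemma arr1 (i : 'I_N) : arrived_before 1 i = A i.
Proof. by apply/setP => x; rewrite !inE invg1 !perm1. Qed.

Lemma pay1 (i : 'I_N) (S : {set 'I_N}) : S \subset A i ->
  pay (AMC vC 1) i S = vC (S :|: [set i]) - vC S.
Proof. by move=> h; rewrite AMC_pay // arr1. Qed.

Lemma A_succ k (hk : (k < N)%N) : A k.+1 = A k :|: [set Ordinal hk].
Proof.
by apply/setP => x; rewrite !inE ltnS leq_eqVlt orbC -val_eqE.
Qed.

Lemma B_succ k (hk : (k < N)%N) : (g <= k)%N -> B k.+1 = B k :|: [set Ordinal hk].
Proof.
move=> gk; apply/setP => x; rewrite !inE ltnS (leq_eqVlt x) -val_eqE /=.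
case: eqP => [->|_] /=; first by rewrite gk orbT.
by rewrite orbF.
Qed.

Lemma card_A k : (k <= N)%N -> #|A k| = k.
Proof.
elim: k => [_|k IH hk].
  by apply/eqP; rewrite cards_eq0; apply/eqP/setP => x; rewrite !inE.
rewrite (A_succ hk) setUC cardsU1 IH ?(ltnW hk) // inE ltnn.
by rewrite add1n.
Qed.

Lemma pf_A k : (k <= g)%N -> pairfree (A k).
Proof.
move=> hk; apply/negP => /existsP[x /andP[xS /existsP[y /andP[yS /eqP e]]]].
move: xS yS; rewrite !inE; lia.
Qed.

Lemma pf_B k : (k <= N)%N -> pairfree (B k).
Proof.
move=> hk; apply/negP => /existsP[x /andP[xS /existsP[y /andP[yS /eqP e]]]].
move: xS yS; rewrite !inE; lia.
Qed.

Lemma vC_pf (S : {set 'I_N}) : S != set0 -> pairfree S -> vC S = mn + (#|S|.-1)%:R * q.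
Proof. by move=> h p; rewrite /vC (negbTE h) p. Qed.

Lemma vC_npf (S : {set 'I_N}) : S != set0 -> ~~ pairfree S -> vC S = mx.
Proof. by move=> h p; rewrite /vC (negbTE h) (negbTE p). Qed.

Lemma ne0 (x : 'I_N) (S : {set 'I_N}) : x \in S -> S != set0.
Proof. by move=> xS; apply/set0Pn; exists x. Qed.

Lemma pay0 (i : 'I_N) : pay (AMC vC 1) i set0 = mn.
Proof.
rewrite pay1 ?sub0set // set0U /vC eqxx subr0 (negbTE (ne0 (set11 i))).
have -> : pairfree [set i].
  apply/negP => /existsP[x /andP[xS /existsP[y /andP[yS /eqP e]]]].
  move: xS yS; rewrite !inE => /eqP xi /eqP yi; move: e; rewrite xi yi; lia.
by rewrite cards1 mul0r addr0.
Qed.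

Lemma vAg : vC (A g) = mn + (g.-1)%:R * q.
Proof.
have hN : (0 < N)%N by lia.
rewrite vC_pf ?pf_A // ?card_A //; last by apply: (@ne0 (Ordinal hN)); rewrite inE.
lia.
Qed.

Lemma payAg (i : 'I_N) : (g <= i)%N -> pay (AMC vC 1) i (A g) < mn.
Proof.
move=> gi.
have hj : (i - g < N)%N by have := ltn_ord i; lia.
rewrite pay1; last by apply/subsetP => x; rewrite !inE; lia.
rewrite vAg vC_npf; last first.
  apply/negPn/existsP; exists (Ordinal hj); rewrite !inE /=.
  have -> : (i - g < g)%N by have := ltn_ord i; lia.
  rewrite /=; apply/existsP; exists i; rewrite !inE eqxx orbT /=.
  apply/eqP; lia.
  by apply: (@ne0 i); rewrite !inE eqxx orbT.
have := hmx2; lra.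
Qed.

Lemma pay_inc (i : 'I_N) (S : {set 'I_N}) : S \subset A i -> S != set0 ->
  pairfree (S :|: [set i]) -> i \notin S -> pay (AMC vC 1) i S = q.
Proof.
move=> SA Sn0 pf iS.
have pS : pairfree S by apply: pf_sub pf; exact: subsetUl.
rewrite pay1 // vC_pf //; last by apply: (@ne0 i); rewrite !inE eqxx orbT.
rewrite vC_pf // setUC cardsU1 iS add1n /=.
have : (0 < #|S|)%N by rewrite card_gt0.
case: #|S| => [|m] //= _.
rewrite -natr1 mulrDl mul1r; lra.
Qed.

Variable tb : tiebreak N.

Lemma step_exp k (hk : (k < N)%N) :
  greedy_step tb (AMC vC 1) (expected k) (Ordinal hk) = expected k.+1.
Proof.
set i := Ordinal hk.
have hN0 : (0 < N)%N by lia.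
set z0 : 'I_N := Ordinal hN0.
have qq := mnq.
rewrite /expected /=.
case: (eqVneq k 0%N) => [k0|kn0].
  have [hin _] := chosen_spec tb (AMC vC 1) [::] i.
  move: hin; rewrite mem_seq1 => /eqP hc.
  rewrite greedy_stepE hc eqxx /= k0 g0; congr [:: _]; apply/setP => x.
  by rewrite !inE -val_eqE /= k0; case: (val x).
case: (ltngtP k g) => hkg.
- idtac.
  have Akn0 : A k != set0 by apply: (@ne0 z0); rewrite inE /=; lia.
  have hp : pay (AMC vC 1) i (A k) = q.
    apply: pay_inc.
    + exact: subxx.
    + exact: Akn0.
    + rewrite -A_succ; apply: pf_A; exact: hkg.
    + by rewrite inE ltnn.
  rewrite greedy_stepE (@chosen_unique _ _ _ _ _ _ (A k)); last first.
  + move=> U; rewrite !in_cons orbF => /orP[/eqP->|/eqP->]; last by rewrite eqxx.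
    by move=> _; rewrite pay0 hp.
  + by rewrite !in_cons eqxx orbT.
  by rewrite (negbTE Akn0) /= eqxx -A_succ.
- idtac.
  have Bkn0 : B k != set0.
    have hg : (g < N)%N by lia.
    by apply: (@ne0 (Ordinal hg)); rewrite inE /=; lia.
  have hp : pay (AMC vC 1) i (B k) = q.
    apply: pay_inc.
    + by apply/subsetP => x; rewrite !inE => /andP[_ h].
    + exact: Bkn0.
    + rewrite -B_succ; [apply: pf_B; exact: hk | exact: ltnW].
    + by rewrite inE ltnn andbF.
  have hA := payAg (i := i) (ltnW hkg).
  rewrite greedy_stepE (@chosen_unique _ _ _ _ _ _ (B k)); last first.
  + move=> U; rewrite !in_cons orbF => /or3P[/eqP->|/eqP->|/eqP->]; last by rewrite eqxx.
    * by move=> _; rewrite pay0 hp.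
    * move=> _; rewrite hp; exact: lt_trans hA qq.
  + by rewrite !in_cons eqxx !orbT.
  have AB : (A g == B k) = false.
    apply/negbTE/negP => /eqP e.
    have : z0 \in A g by rewrite inE /=.
    by rewrite e inE /= leqNgt g0.
  rewrite (negbTE Bkn0) /= AB eqxx -B_succ //; exact: ltnW.
- subst k.
  rewrite greedy_stepE (@chosen_unique _ _ _ _ _ _ set0); last first.
  + move=> U; rewrite !in_cons orbF => /orP[/eqP->|/eqP->]; first by rewrite eqxx.
    move=> _; rewrite pay0; apply: payAg; by rewrite /i.
  + exact: mem_head.
  rewrite eqxx /=; congr [:: _; _]; apply/setP => x.
  by rewrite !inE -val_eqE /= ltnS -eqn_leq.
Qed.

Lemma outcome_exp : greedy_outcome tb (AMC vC 1) 1 = expected N.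
Proof.
rewrite /greedy_outcome.
have -> : [seq (1%g : {perm 'I_N}) t | t <- enum 'I_N] = enum 'I_N.
  by rewrite -[RHS]map_id; apply: eq_map => t; rewrite perm1.
suff H : forall k, (k <= N)%N ->
    foldl (greedy_step tb (AMC vC 1)) [::] (take k (enum 'I_N)) = expected k.
  by have := H N (leqnn N); rewrite take_oversize // size_enum_ord.
elim => [_|k IH hk]; first by rewrite take0.
have hk' : (k < size (enum 'I_N))%N by rewrite size_enum_ord.
rewrite (take_nth (Ordinal hk) hk') foldl_rcons IH ?(ltnW hk) //.
have -> : nth (Ordinal hk) (enum 'I_N) k = Ordinal hk.
  by apply: val_inj; rewrite /= nth_enum_ord.
exact: step_exp.
Qed.

Lemma SW_bound : SW vC (greedy_outcome tb (AMC vC 1) 1) <= 2 * (mn + (g.-1)%:R * q).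
Proof.
rewrite outcome_exp /expected.
have -> : (N == 0%N) = false by lia.
have -> : (N <= g)%N = false by lia.
rewrite /SW big_cons big_cons big_nil addr0 vAg.
have hg : (g < N)%N by lia.
have Bn0 : B N != set0 by apply: (@ne0 (Ordinal hg)); rewrite inE /=; lia.
have pB := pf_B (leqnn N).
rewrite vC_pf // mulr2n mulrDl mul1r lerD2l lerD2l ler_wpM2r ?ler_nat ?(ltW qpos) //.
have := pf_card pB; lia.
Qed.

Definition blk (k : 'I_g) : {set 'I_N} := [set x : 'I_N | (x %% g == k)%N].

Lemma blk_mem (k : 'I_g) : exists2 x : 'I_N, x \in blk k & exists2 y : 'I_N, y \in blk k & (x + g == y)%N.
Proof.
have h1 : (k < N)%N by have := ltn_ord k; lia.
have h2 : (k + g < N)%N by have := ltn_ord k; lia.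
exists (Ordinal h1); first by rewrite inE /= modn_small.
exists (Ordinal h2) => //; by rewrite inE /= modnDr modn_small.
Qed.

Lemma blk_inj : injective blk.
Proof.
move=> k1 k2 e; have [x xb _] := blk_mem k1.
have xb2 : x \in blk k2 by rewrite -e.
by move: xb xb2; rewrite !inE => /eqP h1 /eqP h2; apply: val_inj; rewrite /= -h1 -h2.
Qed.

Lemma P0_partition : partition (blk @: [set: 'I_g]) [set: 'I_N].
Proof.
apply/and3P; split.
- rewrite cover_imset; apply/eqP/setP => x; rewrite in_setT.
  apply/bigcupP; exists (Ordinal (ltn_pmod x g0)); rewrite ?inE //.
- apply/trivIsetP => S T /imsetP[k1 _ ->] /imsetP[k2 _ ->] ne.
  rewrite -setI_eq0; apply/eqP/setP => x; rewrite !inE.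
  apply/negP => /andP[/eqP h1 /eqP h2]; move/eqP: ne; apply.
  by congr blk; apply: val_inj; rewrite /= -h1 -h2.
- apply/imsetP => -[k _ e]; have [x xb _] := blk_mem k.
  by move: xb; rewrite -e inE.
Qed.

Lemma OPT_lb : g%:R * mx <= OPT vC.
Proof.
apply: le_trans (OPT_ge vC P0_partition).
rewrite big_imset /=; last by move=> k1 k2 _ _; exact: blk_inj.
have -> : \sum_(k in [set: 'I_g]) vC (blk k) = \sum_(k in [set: 'I_g]) mx.
  apply: eq_bigr => k _; have [x xb [y yb e]] := blk_mem k.
  apply: vC_npf; first exact: ne0 xb.
  apply/negPn/existsP; exists x; rewrite xb /=; apply/existsP; exists y; by rewrite yb.
by rewrite sumr_const cardsT card_ord mulr_natl.
Qed.

Lemma ratio_ub : SW vC (greedy_outcome tb (AMC vC 1) 1) / OPT vC <=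
  2 * (mn + (g.-1)%:R * q) / (g%:R * mx).
Proof.
have mx0 : 0 < mx by apply: lt_le_trans hmx; apply: lt_le_trans mn0 _; rewrite lerDl mulr_ge0 // ltW // qpos.
have gmx : 0 < g%:R * mx by rewrite mulr_gt0 // ltr0n.
have hO := OPT_lb.
have O0 : 0 < OPT vC by apply: lt_le_trans gmx hO.
have SW0 : 0 <= SW vC (greedy_outcome tb (AMC vC 1) 1).
  rewrite outcome_exp /SW; apply: sumr_ge0 => S _; rewrite /vC.
  case: ifP => _ //; case: ifP => _; last exact: ltW.
  by apply: addr_ge0; [exact: ltW | rewrite mulr_ge0 // ltW // qpos].
apply: (@le_trans _ _ (SW vC (greedy_outcome tb (AMC vC 1) 1) / (g%:R * mx))).
  by apply: ler_wpM2l => //; rewrite lef_pV2 ?posrE.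
by apply: ler_wpM2r; [rewrite invr_ge0 ltW | exact: SW_bound].
Qed.
End Constr.

Lemma inst_ratio (R : realType) (g : nat) (mn mx q : R) (tb : forall n : nat, tiebreak n) :
  (0 < g)%N -> 0 < mn -> mn < q -> mn + (g.-1)%:R * q <= mx -> mx < 2 * mn + (g.-1)%:R * q ->
  exists2 r, (exists (n : nat) (v : {set 'I_n} -> R) (pi : {perm 'I_n}),
         (0 < n)%N /\ bounded_monotone mn mx v /\
         r = SW v (greedy_outcome (tb n) (AMC v pi) pi) / OPT v) &
  r <= 2 * (mn + (g.-1)%:R * q) / (g%:R * mx).
Proof.
move=> g0 mn0 mnq hmx hmx2.
exists (SW (vC (g:=g) mn mx q) (greedy_outcome (tb (g+g)%N) (AMC (vC (g:=g) mn mx q) 1) 1) / OPT (vC (g:=g) mn mx q)); last exact: ratio_ub.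
exists (g+g)%N, (vC (g:=g) mn mx q), 1%g; split; first by rewrite addn_gt0 g0.
by split => //; apply: vC_bm.
Qed.

Lemma one_inst (R : realType) (mn mx : R) (tb : forall n : nat, tiebreak n) :
  0 < mn -> mn <= mx ->
  exists2 r, (exists (n : nat) (v : {set 'I_n} -> R) (pi : {perm 'I_n}),
         (0 < n)%N /\ bounded_monotone mn mx v /\
         r = SW v (greedy_outcome (tb n) (AMC v pi) pi) / OPT v) & r <= 1.
Proof.
move=> mn0 mnx.
pose v1 := fun S : {set 'I_1} => if S == set0 then 0 else mx.
have bm : bounded_monotone mn mx v1.
  split; first by rewrite /v1 eqxx.
  move=> S T Sn0 ST; have Tn0 : T != set0.
    by apply: contraNneq Sn0 => e; rewrite -subset0 -e.
  by rewrite /v1 (negbTE Sn0) (negbTE Tn0) lexx.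
exists (SW v1 (greedy_outcome (tb 1%N) (AMC v1 1%g) 1%g) / OPT v1).
  by exists 1%N, v1, 1%g.
have mx0 : 0 < mx by apply: lt_le_trans mnx.
have hO : mx <= OPT v1.
  have hP : partition [set [set: 'I_1]] [set: 'I_1].
    rewrite /partition cover1 eqxx trivIset1 /= inE eq_sym; apply/set0Pn.
    by exists ord0; rewrite inE.
  apply: le_trans (OPT_ge v1 hP); rewrite big_set1 /v1.
  have -> : ([set: 'I_1] == set0) = false.
    by apply/negbTE/set0Pn; exists ord0; rewrite inE.
  done.
have O0 : 0 < OPT v1 by apply: lt_le_trans hO.
rewrite ler_pdivrMr // mul1r; apply: le_trans hO.
rewrite /greedy_outcome.
have : size [seq (1%g : {perm 'I_1}) t | t <- enum 'I_1] = 1%N by rewrite size_map size_enum_ord.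
case: [seq _ | t <- _] => [|x [|y l]] //= _.
have [hin _] := chosen_spec (tb 1%N) (AMC v1 1%g) [::] x.
move: hin; rewrite mem_seq1 => /eqP hc.
rewrite greedy_stepE hc eqxx /= /SW big_cons big_nil addr0 /v1.
by case: ifP => _; [exact: ltW | exact: lexx].
Qed.

Lemma exists_small (R : realType) (a b : R) : 0 < a -> 0 < b ->
  exists t : R, [/\ 0 < t, t <= a & t <= b].
Proof.
move=> a0 b0; exists (Num.min a b); split.
- by rewrite lt_min a0 b0.
- by rewrite ge_min lexx.
- by rewrite ge_min lexx orbT.
Qed.

Lemma arith (R : realType) (mn mx e t eta : R) : 0 < mn -> 0 < mx -> 0 <= e -> 0 < eta ->
  0 <= t -> t <= eta * mx / 4 ->
  2 * (mn + e * (mn + t)) / ((e + 1) * mx) < 2 * mn / mx + eta.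
Proof.
move=> mn0 mx0 e0 eta0 t0 ht.
have d0 : 0 < (e + 1) * mx by rewrite mulr_gt0 // ltr_wpDl.
rewrite ltr_pdivrMr //.
set c := 2 * mn / mx.
have hc : c * mx = 2 * mn by rewrite /c divfK // lt0r_neq0.
have h1 : e * t <= e * (eta * mx / 4) by apply: ler_wpM2l.
have h2 : 0 < eta * mx by rewrite mulr_gt0.
have h3 : 0 <= e * (eta * mx) by rewrite mulr_ge0 // ltW.
have -> : (c + eta) * ((e + 1) * mx) = (c * mx) * (e + 1) + eta * mx * (e + 1) by ring.
rewrite hc.
have e4 : e * (eta * mx / 4) = e * (eta * mx) / 4 by ring.
rewrite e4 in h1.
move: h1; set u := e * t; set w := e * (eta * mx) => h1.
have -> : 2 * (mn + e * (mn + t)) = 2 * mn + 2 * e * mn + 2 * u by rewrite /u; ring.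
have -> : 2 * mn * (e + 1) + eta * mx * (e + 1) = 2 * mn + 2 * e * mn + w + eta * mx by rewrite /w; ring.
have h3' : 0 <= w by [].
clearbody u w; lra.
Qed.

Unset Implicit Arguments.

Theorem theorem4 (R : realType) (mn mx : R)
    (tb : forall n : nat, tiebreak n) :
  0 < mn -> mn <= mx ->
  (exists delta : nat, (2 <= delta)%N /\
     delta%:R * mn <= mx /\ mx < (delta.+1)%:R * mn) ->
  competitive_ratio_AMC_Vge2 mn mx tb = 2 * mn / mx.
Proof.
move=> mn0 mnx [d [d2 [hlo hhi]]].
have mx0 : 0 < mx by apply: lt_le_trans mnx.
rewrite /competitive_ratio_AMC_Vge2.
set E := (fun r : R => _).
have memE : forall r, (exists (n : nat) (v : {set 'I_n} -> R) (pi : {perm 'I_n}),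
         (0 < n)%N /\ bounded_monotone mn mx v /\
         r = SW v (greedy_outcome (tb n) (AMC v pi) pi) / OPT v) -> E r.
  move=> r [n [v [pi [n0 [bm ->]]]]]; exists n, v, pi; split => //; split => //.
  by exists d; split => //; split.
have lb : forall r, E r -> 2 * mn / mx <= r.
  move=> r [n [v [pi [n0 [[d' [d2' [bm [hlo' _]]]] ->]]]]].
  apply: ratio_lb => //.
  apply: le_trans hlo'.
  have h : (2%:R : R) <= d'%:R by rewrite ler_nat.
  by apply: ler_wpM2r => //; exact: ltW.
have approx : forall eta, 0 < eta -> exists2 r, E r & r < 2 * mn / mx + eta.
  move=> eta eta0.
  have eta4 : 0 < eta * mx / 4 by rewrite divr_gt0 // mulr_gt0.
  case: (ltP (d%:R * mn) mx) => hcase.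
  - set e : R := (d.-1)%:R.
    have de : d%:R = e + 1 by rewrite /e natr1 prednK //; apply: leq_trans d2.
    have d1e : (d.+1)%:R = e + 1 + 1 by rewrite -natr1 de.
    have hd : (1 <= d.-1)%N by clear -d2; lia.
    have e1 : 1 <= e by move: hd; rewrite -(ler_nat R) mulr1n.
    have e0 : 0 < e by apply: lt_le_trans e1.
    have hpos : 0 < mx - d%:R * mn by rewrite subr_gt0.
    have [t [t0 t1 t2]] := exists_small eta4 (divr_gt0 hpos e0).
    have et : t * e <= mx - d%:R * mn by rewrite -ler_pdivlMr.
    have et0 : 0 <= e * t by rewrite mulr_ge0 // ltW.
    have g0 : (0 < d)%N by clear -d2; lia.
    have mnq : mn < mn + t by rewrite ltrDl.
    have hmx : mn + (d.-1)%:R * (mn + t) <= mx.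
      rewrite -/e mulrDr; move: et; rewrite de mulrDl mul1r (mulrC t) => et'; lra.
    have hmx2 : mx < 2 * mn + (d.-1)%:R * (mn + t).
      rewrite -/e mulrDr; move: hhi; rewrite d1e !mulrDl !mul1r => hhi'; lra.
    have [r Er hr] := @inst_ratio R d mn mx (mn + t) tb g0 mn0 mnq hmx hmx2.
    exists r; first exact: memE.
    apply: le_lt_trans hr _; rewrite -/e de; apply: arith => //; exact: ltW.
  - have mxd : mx = d%:R * mn by apply/eqP; rewrite eq_le hcase hlo.
    case: (eqVneq d 2%N) => [d2e|d2n].
    + have [r Er hr] := one_inst tb mn0 mnx.
      exists r; first exact: memE.
      have e2 : mx = 2 * mn by rewrite mxd d2e.
      have -> : 2 * mn / mx = 1 by rewrite e2 divff // -e2 lt0r_neq0.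
      by apply: le_lt_trans hr _; rewrite ltrDl.
    + have d3 : (3 <= d)%N by rewrite ltn_neqAle eq_sym d2n d2.
      set e : R := (d.-1.-1)%:R.
      have hd : (1 <= d.-1.-1)%N by clear -d3; lia.
      have ge : (d.-1)%:R = e + 1 :> R by rewrite /e natr1 prednK //; clear -d3; lia.
      have de : d%:R = e + 1 + 1 by rewrite -ge natr1 prednK //; apply: leq_trans d3.
      have e1 : 1 <= e by move: hd; rewrite -(ler_nat R) mulr1n.
      have e0 : 0 < e by apply: lt_le_trans e1.
      have [t [t0 t1 t2]] := exists_small eta4 (divr_gt0 mn0 e0).
      have et : t * e <= mn by rewrite -ler_pdivlMr.
      have et0 : 0 < e * t by rewrite mulr_gt0.
      have g0 : (0 < d.-1)%N by clear -d3; lia.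
      have mnq : mn < mn + t by rewrite ltrDl.
      have hmx : mn + (d.-1.-1)%:R * (mn + t) <= mx.
        rewrite -/e mulrDr mxd de !mulrDl !mul1r; move: et; rewrite (mulrC t) => et'; lra.
      have hmx2 : mx < 2 * mn + (d.-1.-1)%:R * (mn + t).
        rewrite -/e mulrDr mxd de !mulrDl !mul1r; lra.
      have [r Er hr] := @inst_ratio R d.-1 mn mx (mn + t) tb g0 mn0 mnq hmx hmx2.
      exists r; first exact: memE.
      apply: le_lt_trans hr _; rewrite -/e ge; apply: arith => //; exact: ltW.
have [r0 Er0 _] := approx 1 ltr01.
apply/eqP; rewrite eq_le; apply/andP; split.
- rewrite leNgt; apply/negP => h.
  have hgt : 0 < inf E - 2 * mn / mx by rewrite subr_gt0.
  have [r Er hr] := approx (inf E - 2 * mn / mx) hgt.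
  have hlb : classical_sets.has_lbound E by exists (2 * mn / mx) => y /lb.
  have := ge_inf hlb Er; rewrite addrC subrK in hr.
  by rewrite leNgt hr.
- apply: lb_le_inf; first by exists r0.
  by move=> y /lb.
Qed.
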